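(* Let $1\le r\le K\le d$ and let $\bm{A}=\begin{bmatrix}\widetilde{\bm{A}}&\bm{0}\\\bm{0}&\bm{0}\end{bmatrix}\in\mathbb{R}^{d\times K}$ with $\widetilde{\bm{A}}=\operatorname{diag}(a_1,\ldots,a_r)$, $a_1\ge\cdots\ge a_r>0$. Let $R(\bm{Q})=\bm{A}-\bm{Q}\bm{A}^T\bm{Q}$. For $\bm{Q}\in{\rm St}(d,K)$ partitioned as $\bm{Q}=\begin{bmatrix}\bm{Q}_1&\bm{Q}_2\\\bm{Q}_3&\bm{Q}_4\end{bmatrix}$ with $\bm{Q}_1\in\mathbb{R}^{r\times r}$, $\bm{Q}_2\in\mathbb{R}^{r\times(K-r)}$, $\bm{Q}_3\in\mathbb{R}^{(d-r)\times r}$, $\bm{Q}_4\in\mathbb{R}^{(d-r)\times(K-r)}$, we have $$a_r^2\|\bm{Q}_2\|_F^2\le\|R(\bm{Q})\|_F^2,\qquad a_r^2\|\bm{Q}_3\|_F^2\le\|R(\bm{Q})\|_F^2,\qquad\min_{\bm{V}\in{\rm St}(d-r,K-r)}\|\bm{Q}_4-\bm{V}\|_F^2\le\|\bm{Q}_2\|_F^2.$$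
   Context: ${\rm St}(m,k)=\{\bm{V}\in\mathbb{R}^{m\times k}:\bm{V}^T\bm{V}=\bm{I}_k\}$. *)

(* Defs.v *)
From mathcomp Require Import all_boot all_order all_algebra.
From mathcomp Require Import reals.
Set Implicit Arguments. Unset Strict Implicit. Unset Printing Implicit Defensive.
Import Order.TTheory GRing.Theory Num.Theory.
Local Open Scope ring_scope.

Definition frob2 (R : realType) (m n : nat) (M : 'M[R]_(m, n)) : R :=
  \sum_(i < m) \sum_(j < n) M i j ^+ 2.

Definition stiefel (R : realType) (m n : nat) (V : 'M[R]_(m, n)) : Prop :=
  V^T *m V = 1%:M.

Definition Amat (R : realType) (r m n : nat) (a : 'rV[R]_r) : 'M[R]_(r + m, r + n) :=
  block_mx (diag_mx a) 0 0 0.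

Definition resid (R : realType) (r m n : nat) (a : 'rV[R]_r)
  (Q : 'M[R]_(r + m, r + n)) : 'M[R]_(r + m, r + n) :=
  Amat m n a - Q *m (Amat m n a)^T *m Q.

(* Main.v *)
Require Import Defs.
From mathcomp Require Import all_boot all_order all_algebra.
From mathcomp Require Import reals.
From mathcomp Require Import ring lra zify.
From mathcomp Require Import complex spectral.
Import Order.TTheory GRing.Theory Num.Theory.
Local Open Scope ring_scope.

Section Aux.
Variable R : realType.
Set Implicit Arguments. Unset Strict Implicit.
Lemma frob2_tr m n (M : 'M[R]_(m,n)) : frob2 M = \tr (M^T *m M).
Proof.
rewrite /frob2 /mxtrace exchange_big; apply: eq_bigr => j _; rewrite !mxE.
by apply: eq_bigr => i _; rewrite !mxE expr2.
Qed.

Lemma frob2_ge0 m n (M : 'M[R]_(m,n)) : 0 <= frob2 M.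
Proof. by apply: sumr_ge0 => i _; apply: sumr_ge0 => j _; apply: sqr_ge0. Qed.

Lemma frob2_eq0 m n (M : 'M[R]_(m,n)) : frob2 M = 0 -> M = 0.
Proof.
rewrite /frob2 => H; apply/matrixP => i j; rewrite mxE.
have H1 := psumr_eq0P (fun i _ => sumr_ge0 _ (fun j _ => sqr_ge0 (M i j))) H.
have := psumr_eq0P (fun j _ => sqr_ge0 (M i j)) (H1 i isT) (i:=j) isT.
by move=> /eqP; rewrite sqrf_eq0 => /eqP.
Qed.

Lemma frob2_trC m n (M : 'M[R]_(m,n)) : frob2 M = \tr (M *m M^T).
Proof. by rewrite frob2_tr mxtrace_mulC. Qed.

Lemma frob2_trmx m n (M : 'M[R]_(m,n)) : frob2 M^T = frob2 M.
Proof. by rewrite frob2_tr trmxK -frob2_trC. Qed.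

Lemma frob2_mulOl p m n (G : 'M[R]_(p,m)) (X : 'M[R]_(m,n)) :
  G^T *m G = 1%:M -> frob2 (G *m X) = frob2 X.
Proof. by move=> hG; rewrite !frob2_tr trmx_mul mulmxA -(mulmxA X^T) hG mulmx1. Qed.

Lemma frob2_mulOr m n (X : 'M[R]_(m,n)) (H : 'M[R]_n) :
  H *m H^T = 1%:M -> frob2 (X *m H) = frob2 X.
Proof. by move=> hH; rewrite !frob2_trC trmx_mul mulmxA -(mulmxA X) hH mulmx1. Qed.

Lemma frob2_block m1 m2 n1 n2 (A : 'M[R]_(m1,n1)) (B : 'M[R]_(m1,n2))
  (C : 'M[R]_(m2,n1)) (D : 'M[R]_(m2,n2)) :
  frob2 (block_mx A B C D) = frob2 A + frob2 B + frob2 C + frob2 D.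
Proof.
rewrite /frob2 big_split_ord /=.
rewrite (eq_bigr (fun i => \sum_(j < n1) A i j ^+ 2 + \sum_(j < n2) B i j ^+ 2)); last first.
  by move=> i _; rewrite big_split_ord /=; congr (_ + _); apply: eq_bigr => j _;
     rewrite ?block_mxEul ?block_mxEur.
rewrite [X in _ + X](eq_bigr (fun i => \sum_(j < n1) C i j ^+ 2 + \sum_(j < n2) D i j ^+ 2)); last first.
  by move=> i _; rewrite big_split_ord /=; congr (_ + _); apply: eq_bigr => j _;
     rewrite ?block_mxEdl ?block_mxEdr.
by rewrite !big_split /= !addrA.
Qed.

Lemma frob2_col m1 m2 n (A : 'M[R]_(m1,n)) (B : 'M[R]_(m2,n)) :
  frob2 (col_mx A B) = frob2 A + frob2 B.
Proof.
rewrite /frob2 big_split_ord /=; congr (_ + _).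
- by apply: eq_bigr => i _; apply: eq_bigr => j _; rewrite col_mxEu.
- by apply: eq_bigr => i _; apply: eq_bigr => j _; rewrite col_mxEd.
Qed.

Section Cplx.
Local Open Scope complex_scope.
Lemma ReD (a b : R[i]) : complex.Re (a + b) = complex.Re a + complex.Re b.
Proof. by case: a => a1 a2; case: b => b1 b2. Qed.
Lemma ImD (a b : R[i]) : complex.Im (a + b) = complex.Im a + complex.Im b.
Proof. by case: a => a1 a2; case: b => b1 b2. Qed.
Lemma ReM (a b : R[i]) : complex.Re (a * b) = complex.Re a * complex.Re b - complex.Im a * complex.Im b.
Proof. case: a => a1 a2; case: b => b1 b2; simpc => /=; ring. Qed.
Lemma ImM (a b : R[i]) : complex.Im (a * b) = complex.Re a * complex.Im b + complex.Im a * complex.Re b.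
Proof. case: a => a1 a2; case: b => b1 b2; simpc => /=; ring. Qed.
Lemma ReC (s : R) : complex.Re (s%:C) = s. Proof. by []. Qed.
Lemma ImC (s : R) : complex.Im (s%:C) = 0. Proof. by []. Qed.
Lemma Re_sum n (F : 'I_n -> R[i]) : complex.Re (\sum_i F i) = \sum_i complex.Re (F i).
Proof. by apply: (big_morph _ ReD). Qed.
Lemma Im_sum n (F : 'I_n -> R[i]) : complex.Im (\sum_i F i) = \sum_i complex.Im (F i).
Proof. by apply: (big_morph _ ImD). Qed.

Lemma eig_from_row k (S : 'M[R]_k.+1) (t : 'rV[R]_k.+1) (p : R) :
  S^T = S -> (forall j, \sum_i t 0 i * S i j = p * t 0 j) ->
  0 < \sum_j t 0 j ^+ 2 ->
  exists l (v : 'cV[R]_k.+1), S *m v = l *: v /\ frob2 v = 1.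
Proof.
move=> hS Et T2pos; set T2 := \sum_j t 0 j ^+ 2 in T2pos.
have hSij i j : S i j = S j i by rewrite -[in LHS]hS mxE.
pose c := (Num.sqrt T2)^-1.
exists p, (c *: t^T); split.
  apply/matrixP => i j; rewrite ord1 !mxE mulrCA -(Et i) mulr_sumr; apply: eq_bigr => l _.
  by rewrite !mxE hSij; ring.
rewrite /frob2 (eq_bigr (fun i => c ^+ 2 * t 0 i ^+ 2)); last first.
  by move=> i _; rewrite big_ord1 !mxE exprMn.
rewrite -mulr_sumr -/T2 /c exprVn sqr_sqrtr ?mulVf //; first by rewrite gt_eqF.
exact: ltW.
Qed.

Lemma sym_eig k (S : 'M[R]_k.+1) : S^T = S ->
  exists l (v : 'cV[R]_k.+1), S *m v = l *: v /\ frob2 v = 1.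
Proof.
move=> hS.
pose Sc := map_mx (real_complex R) S.
have [z /eigenvalueP [w wE wn0]] := eigenvalue_closed Sc (ltn0Sn k).
pose x := \row_j complex.Re (w 0 j). pose y := \row_j complex.Im (w 0 j).
pose p := complex.Re z; pose q := complex.Im z.
have Ej j : \sum_i w 0 i * (S i j)%:C = z * w 0 j.
  move/matrixP: (wE) => /(_ 0 j); rewrite !mxE => <-.
  by apply: eq_bigr => i _; rewrite mxE.
have Ex j : \sum_i x 0 i * S i j = p * x 0 j - q * y 0 j.
  have := congr1 (@complex.Re R) (Ej j); rewrite Re_sum ReM !mxE => <-.
  by apply: eq_bigr => i _; rewrite ReM !mxE /= mulr0 subr0.
have Ey j : \sum_i y 0 i * S i j = p * y 0 j + q * x 0 j.
  have := congr1 (@complex.Im R) (Ej j); rewrite Im_sum ImM !mxE => <-.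
  by apply: eq_bigr => i _; rewrite ImM !mxE /= mulr0 add0r.
have hSij i j : S i j = S j i by rewrite -[in LHS]hS mxE.
have key : \sum_j (\sum_i x 0 i * S i j) * y 0 j
         = \sum_j (\sum_i y 0 i * S i j) * x 0 j.
  under eq_bigr do rewrite mulr_suml. under [RHS]eq_bigr do rewrite mulr_suml.
  rewrite [RHS]exchange_big /=; apply: eq_bigr => j _.
  apply: eq_bigr => i _; rewrite hSij; ring.
set X2 := \sum_j x 0 j ^+ 2; set Y2 := \sum_j y 0 j ^+ 2.
set XY := \sum_j x 0 j * y 0 j.
have L : \sum_j (\sum_i x 0 i * S i j) * y 0 j = p * XY - q * Y2.
  rewrite (eq_bigr (fun j => p * (x 0 j * y 0 j) - q * y 0 j ^+ 2)).
    by rewrite sumrB -!mulr_sumr.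
  by move=> j _; rewrite Ex; ring.
have Rr : \sum_j (\sum_i y 0 i * S i j) * x 0 j = p * XY + q * X2.
  rewrite (eq_bigr (fun j => p * (x 0 j * y 0 j) + q * x 0 j ^+ 2)).
    by rewrite big_split -!mulr_sumr.
  by move=> j _; rewrite Ey; ring.
have [j wj] : exists j, w 0 j != 0.
  apply/existsP; apply: contraR wn0 => /existsPn H.
  by apply/eqP/matrixP => i j; rewrite ord1 mxE; apply/eqP/negPn/H.
have pos : 0 < X2 + Y2.
  rewrite /X2 /Y2 -big_split (bigD1 j) //=.
  apply: (@lt_le_trans _ _ (x 0 j ^+ 2 + y 0 j ^+ 2)).
    move: wj; rewrite !mxE; case: (w 0 j) => a b /= hab.
    have : (a != 0) || (b != 0).
      by apply: contraR hab; rewrite negb_or !negbK => /andP[/eqP-> /eqP->].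
    case/orP => h.
      have : 0 < a ^+ 2 by rewrite lt_def sqrf_eq0 h sqr_ge0.
      have := sqr_ge0 b; lra.
    have : 0 < b ^+ 2 by rewrite lt_def sqrf_eq0 h sqr_ge0.
    have := sqr_ge0 a; lra.
  rewrite lerDl; apply: sumr_ge0 => i _; apply: addr_ge0; apply: sqr_ge0.
have q0 : q = 0.
  have : q * (X2 + Y2) = 0 by move: key; rewrite L Rr => E; lra.
  by move/eqP; rewrite mulf_eq0 (gt_eqF pos) orbF => /eqP.
have [X2pos|X2le] := ltP 0 X2.
  apply: (eig_from_row hS (p := p)) X2pos => j0.
  by rewrite Ex q0 mul0r subr0.
have Y2pos : 0 < Y2 by lra.
apply: (eig_from_row hS (p := p)) Y2pos => j0.
by rewrite Ey q0 mul0r addr0.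
Qed.
End Cplx.
Lemma tr11 (A : 'M[R]_1) : \tr A = A 0 0.
Proof. by rewrite /mxtrace big_ord1. Qed.

Lemma frob2_col11 k (v : 'cV[R]_k) : v^T *m v = (frob2 v)%:M.
Proof. by rewrite frob2_tr tr11 -mx11_scalar. Qed.

Lemma orth_complete k (v : 'cV[R]_k.+1) : frob2 v = 1 ->
  exists H : 'M[R]_k.+1, H^T *m H = 1%:M /\ H *m delta_mx 0 0 = v.
Proof.
move=> v1; set e : 'cV[R]_k.+1 := delta_mx 0 0.
have [->|vne] := eqVneq v e; first by exists 1%:M; split; rewrite ?trmx1 mul1mx.
have ee : e^T *m e = 1%:M.
  by rewrite /e trmx_delta mul_delta_mx; apply/matrixP => i j; rewrite !ord1 !mxE.
have ve : v^T *m e = (v 0 0)%:M.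
  by apply/matrixP => i j; rewrite -colE !ord1 !mxE.
have ev : e^T *m v = (v 0 0)%:M by rewrite -[v in LHS]trmxK -trmx_mul ve tr_scalar_mx.
have vv : v^T *m v = 1%:M by rewrite frob2_col11 v1.
set w := v - e.
set s := 2 - 2 * v 0 0.
have wT : w^T = v^T - e^T by rewrite /w raddfB.
have ww : w^T *m w = s%:M.
  rewrite wT mulmxBl !mulmxBr vv ve ev ee.
  by apply/matrixP => i j; rewrite !mxE; case: (i == j); rewrite /s ?mulr1n ?mulr0n; ring.
have s0 : s != 0.
  apply: contra_neq vne => s0.
  have : frob2 w = 0.
    have := congr1 (fun M : 'M[R]_1 => M 0 0) (etrans (esym (frob2_col11 w)) ww).
    by rewrite !mxE s0 /= !mulr1n.
  by move/frob2_eq0/eqP; rewrite subr_eq0 => /eqP.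
set c := 2 / s.
set P := w *m w^T.
have PP : P *m P = s *: P.
  by rewrite /P mulmxA -(mulmxA w) ww mul_mx_scalar scalemxAl.
exists (1%:M - c *: P); split.
  have HT : (1%:M - c *: P)^T = 1%:M - c *: P.
    by rewrite raddfB /= trmx1 linearZ /= /P trmx_mul trmxK.
  rewrite HT mulmxBl !mulmxBr mul1mx mulmx1 -!scalemxAl -!scalemxAr PP !scalerA.
  have coef : c * c * s = c + c by rewrite /c; field.
  by rewrite mul1mx coef scalerDl opprB addrK subrK.
have we : w^T *m e = (v 0 0 - 1)%:M.
  by rewrite wT mulmxBl ve ee raddfB.
rewrite mulmxBl mul1mx -scalemxAl /P -mulmxA we mul_mx_scalar scalerA.
have coef : c * (v 0 0 - 1) = -1 by rewrite /c /s; field.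
by rewrite coef scaleN1r opprK /w addrC subrK.
Qed.
Lemma frob2Z m n a (M : 'M[R]_(m,n)) : frob2 (a *: M) = a ^+ 2 * frob2 M.
Proof.
rewrite /frob2 mulr_sumr; apply: eq_bigr => i _; rewrite mulr_sumr.
by apply: eq_bigr => j _; rewrite mxE exprMn.
Qed.

Lemma frob2_0 m n : frob2 (0 : 'M[R]_(m,n)) = 0.
Proof. by rewrite -(scale0r (0 : 'M[R]_(m,n))) frob2Z expr0n mul0r. Qed.

Lemma frob2_s1 (s : R) : frob2 (s%:M : 'M[R]_1) = s ^+ 2.
Proof. by rewrite /frob2 !big_ord1 mxE /= mulr1n. Qed.

Lemma blk_entries a b (Z : 'M[R]_(1 + a, 1 + b)) s :
  (forall i j, val j = 0%N -> Z i j = s * (val i == 0%N)%:R) ->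
  (forall i j, val i = 0%N -> Z i j = s * (val j == 0%N)%:R) ->
  Z = block_mx s%:M 0 0 (drsubmx Z).
Proof.
move=> Zc Zr; rewrite -[Z in LHS](submxK Z); congr block_mx.
- by apply/matrixP => i j; rewrite !ord1 !mxE Zc //= mulr1.
- by apply/matrixP => i j; rewrite !ord1 !mxE Zr //= mulr0.
- by apply/matrixP => i j; rewrite !ord1 !mxE Zc //= mulr0.
Qed.

Lemma polar n : forall m (M : 'M[R]_(m, n)), (n <= m)%N ->
  (forall x : 'cV[R]_n, frob2 (M *m x) <= frob2 x) ->
  exists V : 'M[R]_(m, n), V^T *m V = 1%:M /\ frob2 M <= \tr (V^T *m M).
Proof.
elim: n => [|n IH] m M hnm hM.
  exists 0; split; first by apply/matrixP => [[]].
  rewrite /mxtrace big_ord0 /frob2 big1 // => i _; exact: big_ord0.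
case: m M hnm hM => [|m'] M // hnm hM.
set S := M^T *m M.
have hS : S^T = S by rewrite /S trmx_mul trmxK.
have [l [v [Sv v1]]] := sym_eig hS.
have [H [HH He]] := orth_complete v1.
have HH' : H *m H^T = 1%:M by apply: mulmx1C.
set e : 'cV[R]_n.+1 := delta_mx 0 0.
set Y := M *m H.
have Ye : Y *m e = M *m v by rewrite /Y -mulmxA He.
have HTv : H^T *m v = e by rewrite -He mulmxA HH mul1mx.
have YYe : Y^T *m (M *m v) = l *: e.
  by rewrite /Y trmx_mul -mulmxA (mulmxA M^T) -/S Sv -scalemxAr HTv.
have lval : frob2 (M *m v) = l.
  by rewrite frob2_tr trmx_mul -mulmxA (mulmxA M^T) -/S Sv -scalemxAr mxtraceZ -frob2_tr v1 mulr1.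
have l0 : 0 <= l by rewrite -lval frob2_ge0.
have l1 : l <= 1 by rewrite -lval -v1 hM.
set s := Num.sqrt l.
have s0 : 0 <= s := sqrtr_ge0 l.
have ss : s ^+ 2 = l := sqr_sqrtr l0.
have s1 : s <= 1 by nra.
have [u [u1 [Yu Mv]]] : exists u : 'cV[R]_m'.+1,
    frob2 u = 1 /\ Y^T *m u = s *: e /\ M *m v = s *: u.
  have [lpos|lle0] := ltP 0 l.
    have spos : 0 < s by rewrite sqrtr_gt0.
    exists (s^-1 *: (M *m v)); split; [|split].
    - by rewrite frob2Z lval exprVn -ss mulVf // gt_eqF // exprn_gt0.
    - by rewrite -scalemxAr YYe scalerA -ss expr2 mulKf // gt_eqF.
    - by rewrite scalerA mulfV ?gt_eqF // scale1r.
  have l00 : l = 0 by lra.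
  have Mv0 : M *m v = 0 by apply: frob2_eq0; rewrite lval.
  have s00 : s = 0 by rewrite /s l00 sqrtr0.
  have rkY : (\rank Y <= n)%N.
    have eK : (e^T <= kermx Y^T)%MS by rewrite sub_kermx -trmx_mul Ye Mv0 trmx0.
    have := mxrankS eK; rewrite mxrank_ker !mxrank_tr.
    have : (\rank e != 0)%N.
      rewrite mxrank_eq0; apply/eqP => /matrixP /(_ 0 0).
      by rewrite !mxE /= => /eqP; rewrite oner_eq0.
    move: (\rank e) (\rank Y) => a b; lia.
  have kne0 : kermx Y != 0.
    by rewrite -mxrank_eq0 mxrank_ker; move: (\rank Y) rkY hnm => b; lia.
  have [r rK rn0] := rowV0Pn kne0.
  have rY : r *m Y = 0 by apply/eqP; rewrite -sub_kermx.
  have rpos : 0 < frob2 r.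
    by rewrite lt_def frob2_ge0 andbT; apply: contra rn0 => /eqP/frob2_eq0 ->.
  exists ((Num.sqrt (frob2 r))^-1 *: r^T); split; [|split].
  - rewrite frob2Z frob2_trmx exprVn sqr_sqrtr ?mulVf ?gt_eqF //; exact: ltW.
  - by rewrite -scalemxAr -trmx_mul rY trmx0 scaler0 s00 scale0r.
  - by rewrite Mv0 s00 scale0r.
have [G [GG Ge]] := orth_complete u1.
have GG' : G *m G^T = 1%:M by apply: mulmx1C.
set e' : 'cV[R]_m'.+1 := delta_mx 0 0.
set X := G^T *m Y.
have Xe : X *m e = s *: e'.
  by rewrite /X -mulmxA Ye Mv -scalemxAr -Ge mulmxA GG mul1mx.
have eX : e'^T *m X = s *: e^T.
  by rewrite /X mulmxA -trmx_mul Ge -(trmxK Y) -trmx_mul Yu linearZ.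
have Xc i j : val j = 0%N -> X i j = s * (val i == 0%N)%:R.
  move=> j0; have -> : j = 0 by apply: val_inj.
  move/matrixP: Xe => /(_ i 0); rewrite /e /e' -colE !mxE eqxx andbT => ->.
  by case: i.
have Xr i j : val i = 0%N -> X i j = s * (val j == 0%N)%:R.
  move=> i0; have -> : i = 0 by apply: val_inj.
  move/matrixP: eX => /(_ 0 j); rewrite /e /e' trmx_delta -rowE !mxE eqxx /= => ->.
  by rewrite andbT.
set X' : 'M[R]_(1 + m', 1 + n) := X.
have Xblk : X' = block_mx (s%:M : 'M_1) 0 0 (drsubmx X') by apply: blk_entries.
set M' := drsubmx X'.
have hM' (x : 'cV[R]_n) : frob2 (M' *m x) <= frob2 x.
  have E : X' *m col_mx (0 : 'cV_1) x = col_mx 0 (M' *m x).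
    by rewrite Xblk mul_block_col !mul0mx mulmx0 !addr0 add0r.
  have E1 : frob2 (M' *m x) = frob2 (M *m (H *m col_mx (0 : 'cV_1) x)).
    transitivity (frob2 (X' *m col_mx (0 : 'cV[R]_1) x)).
      by rewrite E frob2_col frob2_0 add0r.
    by rewrite /X' /X -mulmxA frob2_mulOl ?trmxK // /Y mulmxA.
  have E2 : frob2 x = frob2 (H *m col_mx (0 : 'cV_1) x).
    by rewrite frob2_mulOl // (frob2_col (0 : 'cV[R]_1) x) frob2_0 add0r.
  by rewrite E1 E2; apply: hM.
have [V' [V'V' trV']] := IH m' M' hnm hM'.
set B : 'M[R]_(1 + m', 1 + n) := block_mx 1%:M 0 0 V'.
have BB : B^T *m B = 1%:M.
  rewrite /B tr_block_mx !trmx0 trmx1 mulmx_block !mulmx0 !mul0mx mul1mx !addr0 add0r V'V'.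
  by rewrite -scalar_mx_block.
exists (G *m B *m H^T); split.
  rewrite !trmx_mul trmxK !mulmxA -(mulmxA _ G^T G) GG mulmx1.
  by rewrite -(mulmxA _ B^T B) BB mulmx1 HH'.
have trE : \tr ((G *m B *m H^T)^T *m M) = s + \tr (V'^T *m M').
  rewrite !trmx_mul trmxK -mulmxA mxtrace_mulC -!mulmxA.
  have BX : B^T *m X' = block_mx (s%:M : 'M_1) 0 0 (V'^T *m M').
    rewrite Xblk /B tr_block_mx !trmx0 trmx1 mulmx_block.
    by rewrite !mulmx0 !mul0mx mul_scalar_mx scale1r !addr0 add0r.
  change (\tr (B^T *m X') = s + \tr (V'^T *m M')).
  rewrite BX mxtrace_block.
  by rewrite /mxtrace big_ord1 mxE /= mulr1n.
have fM : frob2 M = s ^+ 2 + frob2 M'.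
  rewrite -(frob2_mulOr M HH') -(frob2_mulOl (G := G^T)); last by rewrite trmxK.
  change (frob2 X' = s ^+ 2 + frob2 M'); rewrite Xblk frob2_block !frob2_0 frob2_s1.
  by rewrite !addr0.
rewrite trE fM.
have : s ^+ 2 <= s by nra.
lra.
Qed.

Lemma frob2_block_ur m1 m2 n1 n2 (A : 'M[R]_(m1,n1)) (B : 'M[R]_(m1,n2))
  (C : 'M[R]_(m2,n1)) (D : 'M[R]_(m2,n2)) :
  frob2 B <= frob2 (block_mx A B C D).
Proof.
rewrite frob2_block; have := frob2_ge0 A; have := frob2_ge0 C; have := frob2_ge0 D.
lra.
Qed.

Lemma row_le1 p q (Q : 'M[R]_(p,q)) : Q^T *m Q = 1%:M ->
  forall i, \sum_j Q i j ^+ 2 <= 1.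
Proof.
move=> hQ i; set P := Q *m Q^T.
have PP : P *m P = P by rewrite /P mulmxA -(mulmxA Q) hQ mulmx1.
have Pii : P i i = \sum_j Q i j ^+ 2 by rewrite /P mxE; apply: eq_bigr => j _; rewrite mxE expr2.
have Psym k : P k i = P i k by rewrite /P !mxE; apply: eq_bigr => j _; rewrite !mxE mulrC.
have : P i i = \sum_k P i k ^+ 2.
  by rewrite -{1}PP mxE; apply: eq_bigr => k _; rewrite Psym expr2.
rewrite (bigD1 i) //= => E.
have h1 : 0 <= \sum_(k | k != i) P i k ^+ 2 by apply: sumr_ge0 => k _; apply: sqr_ge0.
have h0 : 0 <= P i i by rewrite Pii; apply: sumr_ge0 => j _; apply: sqr_ge0.
rewrite -Pii; nra.
Qed.

Lemma frob2_diag k r (a : 'rV[R]_r) (X : 'M[R]_(r, k)) :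
  frob2 (diag_mx a *m X) = \sum_i a 0 i ^+ 2 * \sum_j X i j ^+ 2.
Proof.
rewrite mul_diag_mx /frob2; apply: eq_bigr => i _; rewrite mulr_sumr.
by apply: eq_bigr => j _; rewrite mxE exprMn.
Qed.
End Aux.

(* r = r'.+1 (so 1 <= r), d = r + m, K = r + n, with K <= d i.e. n <= m. *)
Theorem proposition4 (R : realType) (r' m n : nat) (a : 'rV[R]_(r'.+1))
  (Q : 'M[R]_(r'.+1 + m, r'.+1 + n)) :
  (n <= m)%N ->
  (forall i j : 'I_(r'.+1), (i <= j)%N -> a 0 j <= a 0 i) ->
  0 < a 0 ord_max ->
  stiefel Q ->
  [/\ a 0 ord_max ^+ 2 * frob2 (ursubmx Q) <= frob2 (resid a Q),
      a 0 ord_max ^+ 2 * frob2 (dlsubmx Q) <= frob2 (resid a Q)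
    & exists V : 'M[R]_(m, n), stiefel V /\
        frob2 (drsubmx Q - V) <= frob2 (ursubmx Q)].
Proof.
move=> hnm hmono hpos hQ; rewrite /stiefel in hQ *.
set Q1 := ulsubmx Q; set Q2 := ursubmx Q; set Q3 := dlsubmx Q; set Q4 := drsubmx Q.
have hQb : Q = block_mx Q1 Q2 Q3 Q4 by rewrite submxK.
have [h11 _ _ h22] : [/\ Q1^T *m Q1 + Q3^T *m Q3 = 1%:M, Q1^T *m Q2 + Q3^T *m Q4 = 0,
    Q2^T *m Q1 + Q4^T *m Q3 = 0 & Q2^T *m Q2 + Q4^T *m Q4 = 1%:M].
  by move: hQ; rewrite {1 2}hQb tr_block_mx mulmx_block (scalar_mx_block r'.+1 n 1) => /eq_block_mx.
have hM4 (x : 'cV[R]_n) : frob2 (Q4 *m x) <= frob2 x.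
  have : frob2 (col_mx Q2 Q4 *m x) = frob2 x.
    by apply: frob2_mulOl; rewrite tr_col_mx mul_row_col.
  by rewrite mul_col_mx frob2_col => <-; rewrite lerDr frob2_ge0.
have [V [VV hV]] := polar hnm hM4.
have c3 : frob2 (Q4 - V) <= frob2 Q2.
  have tQV : \tr (Q4^T *m V) = \tr (V^T *m Q4) by rewrite -mxtrace_tr trmx_mul trmxK.
  have e1 : frob2 (Q4 - V) = frob2 Q4 - (\tr (V^T *m Q4) + \tr (V^T *m Q4)) + n%:R.
    have hT : (Q4 - V)^T = Q4^T - V^T by rewrite raddfB.
    rewrite !frob2_tr hT mulmxBl !mulmxBr !raddfB /= tQV VV mxtrace1.
    ring.
  have e2 : frob2 Q2 + frob2 Q4 = n%:R by rewrite !frob2_tr -mxtraceD h22 mxtrace1.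
  lra.
set D := diag_mx a.
set A := Amat m n a.
set B := A^T *m Q.
have hB : B = block_mx (D *m Q1) (D *m Q2) 0 0.
  rewrite /B /A /Amat tr_block_mx !trmx0 tr_diag_mx -/D {1}hQb mulmx_block.
  by rewrite !mul0mx !addr0.
have fR : frob2 (resid a Q) = frob2 A - frob2 B + frob2 (B - B^T).
  have tBB : \tr (B^T *m B^T) = \tr (B *m B) by rewrite -mxtrace_tr trmx_mul trmxK.
  have QtA : Q^T *m A = B^T by rewrite /B trmx_mul trmxK.
  have e1 : frob2 (resid a Q) = \tr (A^T *m A) - (\tr (B *m B) + \tr (B *m B)) + \tr (B^T *m B).
    rewrite /resid -/A -mulmxA -/B frob2_tr.
    have hT : (A - Q *m B)^T = A^T - B^T *m Q^T by rewrite raddfB /= trmx_mul.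
    rewrite hT mulmxBl !mulmxBr !raddfB /=.
    rewrite (mulmxA A^T Q B) -/B -(mulmxA B^T Q^T A) QtA tBB.
    rewrite (mulmxA (B^T *m Q^T) Q B) -(mulmxA B^T Q^T Q) hQ mulmx1.
    ring.
  have e2 : frob2 (B - B^T) = (\tr (B^T *m B) + \tr (B^T *m B)) - (\tr (B *m B) + \tr (B *m B)).
    have hT : (B - B^T)^T = B^T - B by rewrite raddfB /= trmxK.
    rewrite frob2_tr hT mulmxBl !mulmxBr !raddfB /= tBB (mxtrace_mulC B B^T).
    lra.
  rewrite e1 e2 !frob2_tr; lra.
have fA : frob2 A = frob2 D by rewrite /A /Amat frob2_block !frob2_0 !addr0.
have fB : frob2 B = frob2 (D *m Q1) + frob2 (D *m Q2) by rewrite hB frob2_block !frob2_0 !addr0.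
have fBB : frob2 (D *m Q2) <= frob2 (B - B^T).
  rewrite hB tr_block_mx !trmx0 opp_block_mx add_block_mx.
  by apply: le_trans (frob2_block_ur _ _ _ _); rewrite oppr0 addr0.
pose p i := \sum_j Q1 i j ^+ 2.
pose q i := \sum_j Q2 i j ^+ 2.
have pq i : p i + q i <= 1.
  have := row_le1 hQ (lshift m i); rewrite big_split_ord /=.
  suff -> : p i + q i = \sum_(j < r'.+1) Q (lshift m i) (lshift n j) ^+ 2 +
                        \sum_(j < n) Q (lshift m i) (rshift r'.+1 j) ^+ 2 by [].
  by congr (_ + _); apply: eq_bigr => j _; rewrite !mxE.
have p0 i : 0 <= p i by apply: sumr_ge0 => j _; apply: sqr_ge0.
have q0 i : 0 <= q i by apply: sumr_ge0 => j _; apply: sqr_ge0.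
have fD : frob2 D = \sum_i a 0 i ^+ 2.
  rewrite -[D]mulmx1 frob2_diag; apply: eq_bigr => i _.
  rewrite (bigD1 i) //= mxE eqxx mulr1n expr1n big1 ?addr0 ?mulr1 // => j /negbTE ji.
  by rewrite mxE eq_sym ji expr0n.
have W : frob2 D - frob2 (D *m Q1) = \sum_i a 0 i ^+ 2 * (1 - p i).
  rewrite fD frob2_diag -sumrB; apply: eq_bigr => i _; rewrite /p; ring.
have hRW : \sum_i a 0 i ^+ 2 * (1 - p i) <= frob2 (resid a Q).
  rewrite -W fR fA fB; lra.
have har i : a 0 ord_max ^+ 2 <= a 0 i ^+ 2.
  have := hmono i ord_max (leq_ord i); nra.
have ar0 : 0 <= a 0 ord_max ^+ 2 by apply: sqr_ge0.
split.
- apply: le_trans hRW.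
  rewrite /frob2 mulr_sumr; apply: ler_sum => i _.
  have := har i; have := pq i; have := q0 i; rewrite -/(q i); nra.
- apply: le_trans hRW.
  have e3 : frob2 Q3 = \sum_i (1 - p i).
    have : frob2 Q1 + frob2 Q3 = r'.+1%:R by rewrite !frob2_tr -mxtraceD h11 mxtrace1.
    rewrite sumrB sumr_const card_ord => <-; rewrite /frob2 /p; ring.
  rewrite e3 mulr_sumr; apply: ler_sum => i _.
  have := har i; have := pq i; have := q0 i; nra.
- by exists V; split.
Qed.
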